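(* Let $\mathbb K$ be a field, $0\ne t\in\mathbb K$, $\kappa\in\mathbb Z^\ell$ with $\kappa_l-\kappa_{l+1}\ge n$, $(\mathbb K,t)$ separating $\mathrm{Std}(\mathcal P_n)$, and let $\{f_{\mathfrak s\mathfrak t}\}$ be a $*$-seminormal basis of $\mathscr H_n(\mathbb K)$ with associated seminormal coefficient system $\alpha$ (so $f_{\mathfrak s\mathfrak t}T_r=\alpha_r(\mathfrak t)f_{\mathfrak s,\mathfrak t(r,r+1)}-[\rho_r(\mathfrak t)]^{-1}f_{\mathfrak s\mathfrak t}$) and scalars $\gamma_{\mathfrak t}$ with $f_{\mathfrak s\mathfrak t}f_{\mathfrak u\mathfrak v}=\delta_{\mathfrak t\mathfrak u}\gamma_{\mathfrak t}f_{\mathfrak s\mathfrak v}$. If $\mathfrak t\in\mathrm{Std}(\mathcal P_n)$, $1\le r<n$, and $\mathfrak v=\mathfrak t(r,r+1)$ is standard, then $\alpha_r(\mathfrak v)\gamma_{\mathfrak t}=\alpha_r(\mathfrak t)\gamma_{\mathfrak v}$.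
   Context: Quantum integers $[d]=[d]_t$. $\mathscr H_n(\mathbb K)=\mathscr H_n(\mathbb K,t,\kappa)$: generators $L_1..L_n,T_1..T_{n-1}$, relations $\prod_l(L_1-[\kappa_l])=0$, $(T_r+1)(T_r-t)=0$, $L_rL_s=L_sL_r$, $T_rT_s=T_sT_r$ ($|r-s|>1$), $T_sT_{s+1}T_s=T_{s+1}T_sT_{s+1}$, $T_rL_s=L_sT_r$ ($s\ne r,r+1$), $L_{r+1}(T_r-t+1)=T_rL_r+1$; $*$ the anti-involution fixing all generators. Separation: $[n]^!\prod_{l<m}\prod_{-n<d<n}[\kappa_l-\kappa_m+d]\ne0$. Content of $(l,r,c)$ is $\kappa_l-r+c$; $c_k(\mathfrak t)$ the content of $k$ in $\mathfrak t$; $\rho_r(\mathfrak t)=c_r(\mathfrak t)-c_{r+1}(\mathfrak t)$; $f_{\mathfrak s,\mathfrak w}=0$ if $\mathfrak w$ is not standard. A $*$-seminormal basis is a basis $\{f_{\mathfrak s\mathfrak t}\}$ indexed by pairs of standard tableaux of the same shape with $L_rf_{\mathfrak s\mathfrak t}=[c_r(\mathfrak s)]f_{\mathfrak s\mathfrak t}$, $f_{\mathfrak s\mathfrak t}L_r=[c_r(\mathfrak t)]f_{\mathfrak s\mathfrak t}$ and $f_{\mathfrak s\mathfrak t}^*=f_{\mathfrak t\mathfrak s}$; for such a basis there exist unique scalars $\alpha_r(\mathfrak t)$ and non-zero scalars $\gamma_{\mathfrak t}$ with the stated properties. *)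

(* Defs.v *)
From HB Require Import structures.
From mathcomp Require Import all_boot all_order all_algebra.
Set Implicit Arguments. Unset Strict Implicit. Unset Printing Implicit Defensive.
Import Order.TTheory GRing.Theory Num.Theory.
Local Open Scope ring_scope.

Definition qint (K : fieldType) (t : K) (d : int) : K :=
  if (0 <= d)%R then \sum_(i < `|d|%N) t ^+ i
  else - (t ^- `|d|%N) * \sum_(i < `|d|%N) t ^+ i.

(* a node (l, r, c): component l (0-based, l < ell), row r >= 1, column c >= 1 *)
Definition node := (nat * nat * nat)%type.
Definition nd0 : node := (0%N, 0%N, 0%N).

Definition multipartition (ell n : nat) (lam : seq (seq nat)) : Prop :=
  [/\ size lam = ell,
      all (fun p => sorted geq p && (0%N \notin p)) lam
    & sumn (map sumn lam) = n].

Definition in_diagram (lam : seq (seq nat)) (x : node) : bool :=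
  let: (l, r, c) := x in
  [&& (l < size lam)%N, (0 < r <= size (nth [::] lam l))%N
    & (0 < c <= nth 0%N (nth [::] lam l) r.-1)%N].

(* a tableau is the sequence of nodes occupied by the entries 1, 2, ..., n:
   entry k sits at node nth nd0 t k.-1 *)
Definition tableau := seq node.

Definition std_shape (n : nat) (lam : seq (seq nat)) (t : tableau) : Prop :=
  [/\ size t = n, uniq t, (forall x, (x \in t) = in_diagram lam x)
    & forall i j, (i < n)%N -> (j < n)%N ->
        let: (l, r, c) := nth nd0 t i in
        let: (l', r', c') := nth nd0 t j in
        l = l' -> (r <= r')%N -> (c <= c')%N -> (i <= j)%N].

Definition std (ell n : nat) (t : tableau) : Prop :=
  exists lam, multipartition ell n lam /\ std_shape n lam t.

(* s, t standard tableaux of the same shape (the shape of a standard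
   tableau is its set of nodes, i.e. the diagram of the multipartition) *)
Definition std_pair (ell n : nat) (s t : tableau) : Prop :=
  [/\ std ell n s, std ell n t & s =i t].

Definition content (kappa : seq int) (x : node) : int :=
  let: (l, r, c) := x in (nth 0 kappa l - r%:Z + c%:Z)%R.

Definition cont (kappa : seq int) (t : tableau) (k : nat) : int :=
  content kappa (nth nd0 t k.-1).

Definition rho (kappa : seq int) (t : tableau) (r : nat) : int :=
  (cont kappa t r - cont kappa t r.+1)%R.

(* t(r, r+1): interchange the entries r and r+1 *)
Definition tswap (r : nat) (t : tableau) : tableau :=
  [seq nth nd0 t (if i == r.-1 then r else if i == r then r.-1 else i)
  | i <- iota 0 (size t)].

Definition hecke_rels (K : fieldType) (t : K) (kappa : seq int) (n : nat)
  (B : algType K) (L T : nat -> B) : Prop :=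
  [/\ \prod_(l < size kappa) (L 1%N - (qint t (nth 0 kappa l))%:A) = 0,
      (forall r, (1 <= r < n)%N -> (T r + 1) * (T r - t%:A) = 0),
      (forall r s, (1 <= r <= n)%N -> (1 <= s <= n)%N -> L r * L s = L s * L r)
    & [/\ 
      (forall r s, (1 <= r < n)%N -> (1 <= s < n)%N -> (r.+1 < s)%N || (s.+1 < r)%N ->
          T r * T s = T s * T r),
      (forall s, (1 <= s)%N -> (s.+1 < n)%N ->
          T s * T s.+1 * T s = T s.+1 * T s * T s.+1),
      (forall r s, (1 <= r < n)%N -> (1 <= s <= n)%N -> s != r -> s != r.+1 ->
          T r * L s = L s * T r)
    & (forall r, (1 <= r < n)%N -> L r.+1 * (T r - t%:A + 1) = T r * L r + 1)]].

Definition alg_hom (K : fieldType) (A B : algType K) (phi : A -> B) : Prop :=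
  [/\ forall (a : K) (x y : A), phi (a *: x + y) = a *: phi x + phi y,
      phi 1 = 1 & forall x y, phi (x * y) = phi x * phi y].

(* (A, L, T) is the algebra presented by the generators L_1..L_n, T_1..T_{n-1}
   and the relations above, i.e. it has the universal property of the
   presentation. *)
Definition is_cyclotomic_hecke (K : fieldType) (t : K) (kappa : seq int) (n : nat)
  (A : algType K) (L T : nat -> A) : Prop :=
  hecke_rels t kappa n L T /\
  forall (B : algType K) (L' T' : nat -> B), hecke_rels t kappa n L' T' ->
    (exists phi : A -> B, [/\ alg_hom phi,
        (forall r, (1 <= r <= n)%N -> phi (L r) = L' r)
      & (forall r, (1 <= r < n)%N -> phi (T r) = T' r)]) /\
    (forall phi psi : A -> B, alg_hom phi -> alg_hom psi ->
        (forall r, (1 <= r <= n)%N -> phi (L r) = psi (L r)) ->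
        (forall r, (1 <= r < n)%N -> phi (T r) = psi (T r)) ->
        forall x, phi x = psi x).

Definition hecke_star (K : fieldType) (n : nat) (A : algType K) (L T : nat -> A)
  (star : A -> A) : Prop :=
  [/\ forall (a : K) (x y : A), star (a *: x + y) = a *: star x + star y,
      (forall x y, star (x * y) = star y * star x),
      (forall x, star (star x) = x),
      (forall r, (1 <= r <= n)%N -> star (L r) = L r)
    & (forall r, (1 <= r < n)%N -> star (T r) = T r)].

(* separation: [n]^! prod_{l<m} prod_{-n<d<n} [kappa_l - kappa_m + d] <> 0 *)
Definition separating (K : fieldType) (t : K) (kappa : seq int) (n : nat) : Prop :=
  (\prod_(k < n) qint t (k.+1)%:Z) *
  (\prod_(l < size kappa) \prod_(m < size kappa | (l < m)%N)
     \prod_(d < (2 * n).-1) qint t (nth 0 kappa l - nth 0 kappa m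
                                    + (d%:Z - (n%:Z - 1)))) != 0.

Definition is_basis (K : fieldType) (ell n : nat) (A : algType K)
  (f : tableau -> tableau -> A) : Prop :=
  exists P : seq (tableau * tableau),
    [/\ uniq P, (forall p, p \in P <-> std_pair ell n p.1 p.2),
        (forall x : A, exists c : tableau * tableau -> K,
            x = \sum_(p <- P) c p *: f p.1 p.2)
      & (forall c : tableau * tableau -> K,
            \sum_(p <- P) c p *: f p.1 p.2 = 0 -> forall p, p \in P -> c p = 0)].

Definition seminormal_basis (K : fieldType) (t : K) (kappa : seq int) (n : nat)
  (A : algType K) (L : nat -> A) (star : A -> A) (f : tableau -> tableau -> A) : Prop :=
  [/\ is_basis (size kappa) n f,
      (forall s u r, std_pair (size kappa) n s u -> (1 <= r <= n)%N ->
          L r * f s u = qint t (cont kappa s r) *: f s u),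
      (forall s u r, std_pair (size kappa) n s u -> (1 <= r <= n)%N ->
          f s u * L r = qint t (cont kappa u r) *: f s u)
    & (forall s u, std_pair (size kappa) n s u -> star (f s u) = f u s)].

(* Main.v *)
Require Import Defs.
From HB Require Import structures.
From mathcomp Require Import all_boot all_order all_algebra.
Import Order.TTheory GRing.Theory Num.Theory.
Local Open Scope ring_scope.

Definition sw (r i : nat) : nat := if i == r.-1 then r else if i == r then r.-1 else i.

Lemma swK r i : (0 < r)%N -> sw r (sw r i) = i.
Proof.
move=> r0; rewrite /sw.
have hne : (r.-1 == r) = false by case: r r0 => //= r _; rewrite eqn_leq ltnn andbF.
have hne' : (r == r.-1) = false by rewrite eq_sym.
case: (eqVneq i r.-1) => [->|h1]; first by rewrite ?eqxx ?hne ?hne' ?eqxx.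
case: (eqVneq i r) => [->|h2]; first by rewrite ?eqxx ?hne ?hne' ?eqxx.
by rewrite (negbTE h1) (negbTE h2).
Qed.

Lemma sw_lt r i s : (r < s)%N -> (i < s)%N -> (sw r i < s)%N.
Proof.
move=> hr hi; rewrite /sw; case: ifP => // _; case: ifP => // _.
by apply: leq_ltn_trans hr; apply: leq_pred.
Qed.

Lemma tswapE r (tt : tableau) : tswap r tt = [seq nth nd0 tt (sw r i) | i <- iota 0 (size tt)].
Proof. by []. Qed.

Lemma size_tswap r tt : size (tswap r tt) = size tt.
Proof. by rewrite tswapE size_map size_iota. Qed.

Lemma nth_tswap r tt i : (i < size tt)%N -> nth nd0 (tswap r tt) i = nth nd0 tt (sw r i).
Proof.
move=> hi; rewrite tswapE (nth_map 0%N); last by rewrite size_iota.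
by rewrite nth_iota.
Qed.

Lemma tswapK r tt : (0 < r)%N -> (r < size tt)%N -> tswap r (tswap r tt) = tt.
Proof.
move=> r0 rs; apply: (@eq_from_nth _ nd0); first by rewrite !size_tswap.
move=> i; rewrite !size_tswap => hi.
rewrite nth_tswap ?size_tswap // nth_tswap ?swK //.
exact: sw_lt.
Qed.

Lemma mem_tswap r tt : (0 < r)%N -> (r < size tt)%N -> tswap r tt =i tt.
Proof.
move=> r0 rs x; rewrite tswapE; apply/mapP/idP.
  case=> i; rewrite mem_iota add0n => /andP[_ hi] ->.
  by apply: mem_nth; apply: sw_lt.
move=> xin; exists (sw r (index x tt)).
  by rewrite mem_iota add0n /=; apply: sw_lt => //; rewrite index_mem.
by rewrite swK // nth_index.
Qed.

Theorem corollary3p10 (K : fieldType) (t : K) (kappa : seq int) (n : nat)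
  (A : algType K) (L T : nat -> A) (star : A -> A)
  (f : tableau -> tableau -> A) (alpha : nat -> tableau -> K) (gamma : tableau -> K) :
  t != 0 ->
  (forall l, (l.+1 < size kappa)%N -> (n%:Z <= nth 0 kappa l - nth 0 kappa l.+1)%R) ->
  separating t kappa n ->
  is_cyclotomic_hecke t kappa n L T ->
  hecke_star n L T star ->
  seminormal_basis t kappa n L star f ->
  (* seminormal coefficient system alpha, with the convention f_{s,w} = 0
     when w is not standard *)
  (forall s u r, std_pair (size kappa) n s u -> (1 <= r < n)%N ->
     std (size kappa) n (tswap r u) ->
     f s u * T r = alpha r u *: f s (tswap r u) - (qint t (rho kappa u r))^-1 *: f s u) ->
  (forall s u r, std_pair (size kappa) n s u -> (1 <= r < n)%N ->
     ~ std (size kappa) n (tswap r u) ->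
     f s u * T r = 0 - (qint t (rho kappa u r))^-1 *: f s u) ->
  (forall s u u' v, std_pair (size kappa) n s u -> std_pair (size kappa) n u' v ->
     f s u * f u' v = (if u == u' then gamma u else 0) *: f s v) ->
  (forall u, std (size kappa) n u -> gamma u != 0) ->
  forall (tt : tableau) (r : nat),
    std (size kappa) n tt -> (1 <= r < n)%N -> std (size kappa) n (tswap r tt) ->
    alpha r (tswap r tt) * gamma tt = alpha r tt * gamma (tswap r tt).
Proof.
move=> _ _ _ _ [slin smul _ _ sT] [[P [_ HP _ Hind]] _ _ sf] Hact _ Hmul _ tt r stt hr sv.
set v := tswap r tt.
case: (eqVneq v tt) => [->|hvt]; first by [].
have hsz : size tt = n by case: stt => lam [_ []].
have r0 : (0 < r)%N by case/andP: hr.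
have rs : (r < size tt)%N by rewrite hsz; case/andP: hr.
have memv : v =i tt by apply: mem_tswap.
have ptt : std_pair (size kappa) n tt tt by split.
have pvv : std_pair (size kappa) n v v by split.
have pvt : std_pair (size kappa) n v tt by split.
have ptv : std_pair (size kappa) n tt v by split => // x; rewrite memv.
have vK : tswap r v = tt by apply: tswapK.
have star0 : star 0 = 0.
  have h := slin 1 0 0; rewrite !scale1r !addr0 in h.
  by apply: (addrI (star 0)); rewrite -h addr0.
have starB : forall (a b : K) x y, star (a *: x - b *: y) = a *: star x - b *: star y.
  move=> a b x y; rewrite slin -scaleNr -[(- b) *: y]addr0 slin star0 addr0.
  by rewrite scaleNr.
set c := (qint t (rho kappa tt r))^-1.
set c' := (qint t (rho kappa v r))^-1.
have H1 : T r * f tt tt = alpha r tt *: f v tt - c *: f tt tt.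
  have := Hact tt tt r ptt hr sv; rewrite -/v -/c => /(congr1 star).
  by rewrite smul sT // sf // starB !sf.
have H2 : f v v * T r = alpha r v *: f v tt - c' *: f v v.
  by have := Hact v v r pvv hr; rewrite vK -/c'; apply.
have E : (f v v * T r) * f tt tt = f v v * (T r * f tt tt) by rewrite mulrA.
rewrite H2 H1 mulrBl mulrBr -!scalerAl -!scalerAr !Hmul // !eqxx (negbTE hvt) in E.
rewrite !scale0r !scaler0 !subr0 !scalerA in E.
move/eqP: E; rewrite -subr_eq0 -scalerBl scaler_eq0 => /orP[/eqP h | hF].
  by apply/eqP; rewrite -subr_eq0 h.
have Pin : (v, tt) \in P by apply/HP.
have Hs : \sum_(p <- P) (p == (v, tt))%:R *: f p.1 p.2 = 0.
  apply: big1 => p _; case: eqP => [->|_]; last by rewrite scale0r.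
  by rewrite scale1r (eqP hF).
have := Hind (fun p => (p == (v, tt))%:R) Hs (v, tt) Pin.
by rewrite eqxx => /eqP; rewrite oner_eq0.
Qed.
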